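(* Let $(\Lambda,d)$ be a finitely aligned $k$-graph with groupoid of germs ${\mathcal G}_\Lambda$. The family $\{\Psi(F),\ {\mathcal G}_\Lambda\setminus\Psi(F): F\in S_\Lambda\}$ is a subbasis for a locally compact Hausdorff topology on ${\mathcal G}_\Lambda$ in which each $\Psi(F)$ is compact.
   Context: A $k$-graph $(\Lambda,d)$ is a countable small category $\Lambda$ (objects identified with identity morphisms) with a functor $d:\Lambda\to\mathbb N^k$ satisfying unique factorization: whenever $d(\lambda)=m+n$ there are unique $\mu,\nu$ with $d(\mu)=m$, $d(\nu)=n$, $\lambda=\mu\nu$. $r,s$ range/source. $\Lambda^{\min}(\lambda,\mu)=\{(\alpha,\beta):\lambda\alpha=\mu\beta,\ d(\lambda\alpha)=d(\lambda)\vee d(\mu)\}$; finitely aligned means all are finite. $S_\Lambda$: finite $F\subseteq\{(\lambda,\mu):s(\lambda)=s(\mu)\}$ with distinct $(\lambda,\mu),(\nu,\omega)\in F$ satisfying $\Lambda^{\min}(\lambda,\nu)=\Lambda^{\min}(\mu,\omega)=\emptyset$; inverse semigroup with $FG=\bigcup_{(\lambda,\mu)\in F,(\xi,\eta)\in G}\{(\lambda\alpha,\eta\beta):(\alpha,\beta)\in\Lambda^{\min}(\mu,\xi)\}$, $F^*=\{(\mu,\lambda):(\lambda,\mu)\in F\}$, idempotents $E(S_\Lambda)$. $\Omega_{k,m}$ ($m\in(\mathbb N\cup\{\infty\})^k$): objects $\{p\in\mathbb N^k:p\le m\}$, morphisms $(p,q)$, $p\le q\le m$, $r(p,q)=p$,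 $s(p,q)=q$, $d(p,q)=q-p$. $X_\Lambda$ = degree-preserving functors $x:\Omega_{k,m}\to\Lambda$, $d(x)=m$, $r(x)=x(0,0)$; $\sigma^m x(p,q)=x(p+m,q+m)$; $\lambda x$ ($s(\lambda)=x(0,0)$) has $(\lambda x)(0,n)=\lambda x(0,n-d(\lambda))$. $D_F=\{x:\exists(\lambda,\mu)\in F,\ x(0,d(\mu))=\mu\}$; $\theta_F(x)=\lambda\sigma^{d(\mu)}x$. $X_\Lambda$ is topologized by the subbasis $\{D_F,X_\Lambda\setminus D_F\}$ (locally compact Hausdorff). ${\mathcal G}_\Lambda$: germs $[F,x]$ of pairs $(F,x)$, $x\in D_F$, under $(F,x)\sim(G,y)$ iff $x=y$ and some $P\in E(S_\Lambda)$ has $x\in D_P$, $FP=GP$; product $[F,\theta_G(x)][G,x]=[FG,x]$, inverse $[F^*,\theta_F(x)]$, $r([F,x])=\theta_F(x)$, $s([F,x])=x$. $\Psi(F)=\{[F,x]:x\in D_F\}$. *)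

(* Defs.v *)
From HB Require Import structures.
From mathcomp Require Import all_boot all_classical all_reals topology.
Set Implicit Arguments.
Unset Strict Implicit.
Unset Printing Implicit Defensive.
Local Open Scope classical_set_scope.

Definition nk (k : nat) := 'I_k -> nat.
Definition nk_add k (m n : nk k) : nk k := fun i => (m i + n i)%N.
Definition nk_join k (m n : nk k) : nk k := fun i => maxn (m i) (n i).
Definition nk_le k (m n : nk k) : Prop := forall i, (m i <= n i)%N.
Definition nk0 k : nk k := fun _ => 0%N.
Arguments nk0 : clear implicits.

(** A k-graph: a countable small category whose objects are identified with
    the identity morphisms (an identity/object is a morphism [v] with
    [r v = v]), with range [r], source [s], composition [comp a b] (meaningful
    when [s a = r b]) and a degree functor [d] into N^k satisfying the unique
    factorisation property. *)
Definition is_kgraph (k : nat) (M : Type) (r s : M -> M) (comp : M -> M -> M)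
    (d : M -> nk k) : Prop :=
  [/\ (exists f : M -> nat, injective f) ,
      (forall a, r (r a) = r a /\ s (r a) = r a /\ r (s a) = s a /\ s (s a) = s a),
      (forall a b, s a = r b -> r (comp a b) = r a /\ s (comp a b) = s b)
    & [/\ (forall a, comp (r a) a = a /\ comp a (s a) = a),
      (forall a b c, s a = r b -> s b = r c -> comp (comp a b) c = comp a (comp b c)),
      (forall a, d (r a) = nk0 k /\ forall b, s a = r b -> d (comp a b) = nk_add (d a) (d b))
    & (forall a (m n : nk k), d a = nk_add m n ->
         exists! p : M * M, [/\ s p.1 = r p.2, d p.1 = m, d p.2 = n & a = comp p.1 p.2])]].

Record kgraph (k : nat) := KGraph {
  kmor : Type;
  kr : kmor -> kmor;
  ks : kmor -> kmor;
  kcomp : kmor -> kmor -> kmor;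
  kdeg : kmor -> nk k;
  kgraph_ax : is_kgraph kr ks kcomp kdeg }.

Section KGraphDefs.
Context (k : nat) (L : kgraph k).
Local Notation M := (kmor L).
Local Notation r := (@kr _ L).
Local Notation s := (@ks _ L).
Local Notation comp := (@kcomp _ L).
Local Notation d := (@kdeg _ L).

Definition Lmin (l m : M) : set (M * M) :=
  [set ab | [/\ r ab.1 = s l, r ab.2 = s m, comp l ab.1 = comp m ab.2
             & d (comp l ab.1) = nk_join (d l) (d m)]].

Definition finitely_aligned : Prop := forall l m, finite_set (Lmin l m).

Definition S_Lambda (F : set (M * M)) : Prop :=
  [/\ finite_set F,
      (forall p, F p -> s p.1 = s p.2)
    & (forall p q, F p -> F q -> p <> q ->
         Lmin p.1 q.1 = set0 /\ Lmin p.2 q.2 = set0)].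

Definition Sprod (F G : set (M * M)) : set (M * M) :=
  [set z | exists p q ab, [/\ F p, G q, Lmin p.2 q.1 ab
                           & z = (comp p.1 ab.1, comp q.2 ab.2)]].

Definition Sidem (P : set (M * M)) : Prop := S_Lambda P /\ Sprod P P = P.

(** Paths: degree-preserving functors x : Ω_{k,m} -> Λ.  The degree
    m ∈ (N ∪ {∞})^k is ['I_k -> option nat] ([None] = ∞); the functor is
    recorded as a partial map on pairs (p,q), defined exactly on the
    morphisms (p,q), p ≤ q ≤ m, of Ω_{k,m}. *)
Definition ext_le (q : nk k) (m : 'I_k -> option nat) : Prop :=
  forall i, if m i is Some mi then (q i <= mi)%N else true.

Definition path_t := (('I_k -> option nat) *
                      (nk k -> nk k -> option M))%type.

Definition is_path (x : path_t) : Prop :=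
  let: (m, f) := x in
  [/\ (forall p q, (exists a, f p q = Some a) <-> (nk_le p q /\ ext_le q m)),
      (forall p q a, f p q = Some a -> d a = (fun i => q i - p i)%N),
      (forall p a, f p p = Some a -> r a = a),
      (forall p q a, f p q = Some a -> f p p = Some (r a) /\ f q q = Some (s a))
    & (forall p q t a b c, f p q = Some a -> f q t = Some b -> f p t = Some c ->
         s a = r b /\ c = comp a b)].

Definition DF (F : set (M * M)) (x : path_t) : Prop :=
  is_path x /\ exists p, F p /\ x.2 (nk0 k) (d p.2) = Some p.2.

Definition germ_pair (z : set (M * M) * path_t) : Prop :=
  S_Lambda z.1 /\ DF z.1 z.2.

Definition germ_rel (z w : set (M * M) * path_t) : Prop :=
  z.2 = w.2 /\ exists P, [/\ Sidem P, DF P z.2 & Sprod z.1 P = Sprod w.1 P].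

Definition germ_class (z : set (M * M) * path_t) : set (set (M * M) * path_t) :=
  [set w | germ_pair w /\ germ_rel z w].

Definition is_germ (C : set (set (M * M) * path_t)) : Prop :=
  exists z, germ_pair z /\ C = germ_class z.

End KGraphDefs.

Definition germ k (L : kgraph k) := {C : set (set (kmor L * kmor L) * path_t L) | is_germ C}.

HB.instance Definition _ k (L : kgraph k) := gen_eqMixin (germ L).
HB.instance Definition _ k (L : kgraph k) := gen_choiceMixin (germ L).

Definition Psi k (L : kgraph k) (F : set (kmor L * kmor L)) : set (germ L) :=
  [set g | exists x, DF F x /\ sval g = germ_class (F, x)].

Definition germ_subbasis_dom k (L : kgraph k) : set (bool * set (kmor L * kmor L)) :=
  [set bF | S_Lambda bF.2].
Definition germ_subbasis k (L : kgraph k) (bF : bool * set (kmor L * kmor L)) :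
  set (germ L) := if bF.1 then Psi bF.2 else ~` Psi bF.2.

Definition germ_top k (L : kgraph k) := germ L.
HB.instance Definition _ k (L : kgraph k) := Choice.on (germ_top L).
HB.instance Definition _ k (L : kgraph k) :=
  isSubBaseTopological.Build (germ_top L) (@germ_subbasis_dom k L) (@germ_subbasis k L).

(* Main.v *)
Require Import Defs.
From HB Require Import structures.
From mathcomp Require Import all_boot all_classical all_reals topology.
From mathcomp Require Import zify.
Local Open Scope classical_set_scope.
Set Implicit Arguments.
Unset Strict Implicit.

Section KG.
Variable k : nat.
Variable L : kgraph k.
Local Notation M := (kmor L).
Local Notation r := (@kr _ L).
Local Notation s := (@ks _ L).
Local Notation comp := (@kcomp _ L).
Local Notation d := (@kdeg _ L).

Lemma nk_ext (m n : nk k) : (forall i, m i = n i) -> m = n.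
Proof. by move=> H; apply: funext. Qed.

Lemma ax_rs a : r (r a) = r a /\ s (r a) = r a /\ r (s a) = s a /\ s (s a) = s a.
Proof. by case: (kgraph_ax L) => _ H _ _. Qed.
Lemma r_r a : r (r a) = r a. Proof. by case: (ax_rs a). Qed.
Lemma s_r a : s (r a) = r a. Proof. by case: (ax_rs a) => _ []. Qed.
Lemma r_s a : r (s a) = s a. Proof. by case: (ax_rs a) => _ [] _ []. Qed.
Lemma s_s a : s (s a) = s a. Proof. by case: (ax_rs a) => _ [] _ []. Qed.
Lemma r_comp a b : s a = r b -> r (comp a b) = r a.
Proof. by case: (kgraph_ax L) => _ _ H _ /H []. Qed.
Lemma s_comp a b : s a = r b -> s (comp a b) = s b.
Proof. by case: (kgraph_ax L) => _ _ H _ /H []. Qed.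
Lemma comp_r a : comp (r a) a = a.
Proof. by case: (kgraph_ax L) => _ _ _ [H _ _ _]; case: (H a). Qed.
Lemma comp_s a : comp a (s a) = a.
Proof. by case: (kgraph_ax L) => _ _ _ [H _ _ _]; case: (H a). Qed.
Lemma compA a b c : s a = r b -> s b = r c -> comp (comp a b) c = comp a (comp b c).
Proof. by case: (kgraph_ax L) => _ _ _ [_ H _ _]; apply: H. Qed.
Lemma d_r a : d (r a) = nk0 k.
Proof. by case: (kgraph_ax L) => _ _ _ [_ _ H _]; case: (H a). Qed.
Lemma d_comp a b : s a = r b -> d (comp a b) = nk_add (d a) (d b).
Proof. by case: (kgraph_ax L) => _ _ _ [_ _ H _]; case: (H a) => _; apply. Qed.
Lemma d_s a : d (s a) = nk0 k.
Proof. by rewrite -r_s d_r. Qed.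
Lemma d_compi a b i : s a = r b -> d (comp a b) i = (d a i + d b i)%N.
Proof. by move=> /d_comp ->. Qed.

Lemma fact_ex a (m n : nk k) : d a = nk_add m n ->
  exists u v, [/\ s u = r v, d u = m, d v = n & a = comp u v].
Proof.
case: (kgraph_ax L) => _ _ _ [_ _ _ H] /H [[u v] [[/= ? ? ? ?] _]].
by exists u, v.
Qed.

Lemma fact_uniq u v u' v' : s u = r v -> s u' = r v' -> d u = d u' ->
  comp u v = comp u' v' -> u = u' /\ v = v'.
Proof.
move=> suv suv' duu' E.
have dvv' : d v = d v'.
  apply: nk_ext => i; have := d_compi i suv; rewrite E d_compi // duu'; lia.
case: (kgraph_ax L) => _ _ _ [_ _ _ H].
have [[u0 v0] [_ U]] := H (comp u v) (d u) (d v) (d_comp suv).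
have e1 := U (u, v) (And4 suv erefl erefl erefl).
have e2 := U (u', v') (And4 suv' (esym duu') (esym dvv') E).
by rewrite e1 in e2; case: e2 => -> ->.
Qed.

Lemma deg0 a : d a = nk0 k -> a = r a /\ a = s a.
Proof.
move=> da.
have H1 : comp (r a) a = comp a (s a) by rewrite comp_r comp_s.
have [e1 e2] := fact_uniq (s_r a) (esym (r_s a)) (etrans (d_r a) (esym da)) H1.
by split; [exact: (esym e1) | exact: e2].
Qed.

Lemma lcancel a b c : s a = r b -> s a = r c -> comp a b = comp a c -> b = c.
Proof. by move=> h1 h2 /(fact_uniq h1 h2 erefl) []. Qed.

Lemma rcancel a b c : s a = r c -> s b = r c -> d a = d b -> comp a c = comp b c -> a = b.
Proof. by move=> h1 h2 h3 /(fact_uniq h1 h2 h3) []. Qed.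

Definition nk_sub (m n : nk k) : nk k := fun i => (m i - n i)%N.

Lemma common_ext a b x y : s a = r x -> s b = r y -> comp a x = comp b y ->
  exists al be ga, [/\ Lmin a b (al, be), s al = r ga, s be = r ga,
                       x = comp al ga & y = comp be ga].
Proof.
move=> sax sby E.
set nu := comp a x.
set J := nk_join (d a) (d b).
have dnu1 : forall i, d nu i = (d a i + d x i)%N by move=> i; rewrite d_compi.
have dnu2 : forall i, d nu i = (d b i + d y i)%N by move=> i; rewrite /nu E d_compi.
have h1 : d nu = nk_add J (nk_sub (d nu) J).
  apply: nk_ext => i; rewrite /nk_add /nk_sub /J /nk_join.
  have := dnu1 i; have := dnu2 i; lia.
have [n0 [w [snw dn0 dw enu]]] := fact_ex h1.
have h2 : d n0 = nk_add (d a) (nk_sub J (d a)).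
  apply: nk_ext => i; rewrite /nk_add /nk_sub dn0 /J /nk_join; lia.
have [a' [al [sal da' dal en0]]] := fact_ex h2.
have h3 : d n0 = nk_add (d b) (nk_sub J (d b)).
  apply: nk_ext => i; rewrite /nk_add /nk_sub dn0 /J /nk_join; lia.
have [b' [be [sbe db' dbe en0']]] := fact_ex h3.
have snw1 : s al = r w by rewrite -snw en0 s_comp.
have snw2 : s be = r w by rewrite -snw en0' s_comp.
have E1 : comp a x = comp a' (comp al w) by rewrite -/nu enu en0 compA.
have E2 : comp b y = comp b' (comp be w) by rewrite -E -/nu enu en0' compA.
have [ea ex] := fact_uniq sax (etrans sal (esym (r_comp snw1))) (esym da') E1.
have [eb ey] := fact_uniq sby (etrans sbe (esym (r_comp snw2))) (esym db') E2.
subst a' b'.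
exists al, be, w; split => //.
split => //=; rewrite -?en0 -?en0' //.
Qed.


Lemma SL_eq2 F p q : S_Lambda F -> F p -> F q ->
  (exists al be, [/\ s p.2 = r al, s q.2 = r be & comp p.2 al = comp q.2 be]) -> p = q.
Proof.
move=> [_ _ H] Fp Fq [al [be [h1 h2 h3]]].
case: (pselect (p = q)) => // npq.
have [_ E] := H p q Fp Fq npq.
have [al' [be' [ga [Lm _ _ _ _]]]] := common_ext h1 h2 h3.
by move: Lm; rewrite E; case.
Qed.

Lemma SL_eq1 F p q : S_Lambda F -> F p -> F q ->
  (exists al be, [/\ s p.1 = r al, s q.1 = r be & comp p.1 al = comp q.1 be]) -> p = q.
Proof.
move=> [_ _ H] Fp Fq [al [be [h1 h2 h3]]].
case: (pselect (p = q)) => // npq.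
have [E _] := H p q Fp Fq npq.
have [al' [be' [ga [Lm _ _ _ _]]]] := common_ext h1 h2 h3.
by move: Lm; rewrite E; case.
Qed.

Definition seg (x : path_t L) (nu : M) := is_path x /\ x.2 (nk0 k) (d nu) = Some nu.

Lemma ext_le_mono (p q : nk k) m : nk_le p q -> ext_le q m -> ext_le p m.
Proof. move=> H1 H2 i; move: (H1 i) (H2 i); case: (m i) => //= n; lia. Qed.

Lemma ext_le_join (p q : nk k) m : ext_le p m -> ext_le q m -> ext_le (nk_join p q) m.
Proof. move=> H1 H2 i; move: (H1 i) (H2 i); rewrite /nk_join; case: (m i) => //= n; lia. Qed.

Lemma path_dom (x : path_t L) p q : is_path x ->
  (exists a, x.2 p q = Some a) <-> nk_le p q /\ ext_le q x.1.
Proof. by case: x => m f [H _ _ _ _]. Qed.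

Lemma path_deg (x : path_t L) p q a : is_path x -> x.2 p q = Some a -> d a = nk_sub q p.
Proof. by case: x => m f [_ H _ _ _]; apply: H. Qed.

Lemma path_obj (x : path_t L) p a : is_path x -> x.2 p p = Some a -> r a = a.
Proof. by case: x => m f [_ _ H _ _]; apply: H. Qed.

Lemma path_rs (x : path_t L) p q a : is_path x -> x.2 p q = Some a ->
  x.2 p p = Some (r a) /\ x.2 q q = Some (s a).
Proof. by case: x => m f [_ _ _ H _]; apply: H. Qed.

Lemma path_comp (x : path_t L) p q t a b c : is_path x -> x.2 p q = Some a ->
  x.2 q t = Some b -> x.2 p t = Some c -> s a = r b /\ c = comp a b.
Proof. by case: x => m f [_ _ _ _ H]; apply: H. Qed.

Lemma nk_le0 (q : nk k) : nk_le (nk0 k) q.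
Proof. by []. Qed.

Lemma seg_dom x nu : seg x nu -> ext_le (d nu) x.1.
Proof. by move=> [px e]; have /(path_dom _ _ px) [] : exists a, x.2 (nk0 k) (d nu) = Some a by exists nu. Qed.

Lemma seg_pref x a b : s a = r b -> seg x (comp a b) -> seg x a.
Proof.
move=> sab sx; have [px e] := sx; have dm := seg_dom sx.
have dle : nk_le (d a) (d (comp a b)) by move=> i; rewrite d_compi //; lia.
have [u eu] : exists u, x.2 (nk0 k) (d a) = Some u.
  by apply/(path_dom _ _ px); split => //; apply: ext_le_mono dm.
have [v ev] : exists v, x.2 (d a) (d (comp a b)) = Some v by apply/(path_dom _ _ px).
have [suv E] := path_comp px eu ev e.
have du : d u = d a.
  by rewrite (path_deg px eu); apply: nk_ext => i; rewrite /nk_sub /nk0; lia.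
have [eua _] := fact_uniq suv sab du (esym E).
by rewrite -eua; split => //; rewrite du.
Qed.

Lemma seg_join x a b : seg x a -> seg x b ->
  exists al be, Lmin a b (al, be) /\ seg x (comp a al).
Proof.
move=> sa sb; have [px ea] := sa; have [_ eb] := sb.
set J := nk_join (d a) (d b).
have dJ : ext_le J x.1 by apply: ext_le_join; apply: seg_dom.
have [c ec] : exists c, x.2 (nk0 k) J = Some c by apply/(path_dom _ _ px).
have [al eal] : exists al, x.2 (d a) J = Some al.
  by apply/(path_dom _ _ px); split => // i; rewrite /J /nk_join; lia.
have [be ebe] : exists be, x.2 (d b) J = Some be.
  by apply/(path_dom _ _ px); split => // i; rewrite /J /nk_join; lia.
have [s1 E1] := path_comp px ea eal ec.
have [s2 E2] := path_comp px eb ebe ec.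
have dc : d c = J.
  by rewrite (path_deg px ec); apply: nk_ext => i; rewrite /nk_sub /nk0; lia.
exists al, be; split; first by split => //=; rewrite -?E1 -?E2.
by rewrite -E1; split => //; rewrite dc.
Qed.

Lemma seg_uniq x a b : seg x a -> seg x b -> d a = d b -> a = b.
Proof. by move=> [_ ea] [_ eb] dab; move: eb; rewrite -dab ea => -[]. Qed.


Definition SegR (F G : set (M * M)) x := exists f g al be,
  [/\ F f, G g, s f.2 = r al, s g.2 = r be &
   [/\ comp f.2 al = comp g.2 be, seg x (comp f.2 al) & comp f.1 al = comp g.1 be]].

Lemma SL_s F p : S_Lambda F -> F p -> s p.1 = s p.2.
Proof. by move=> [_ H _]; apply: H. Qed.

Lemma DF_seg F x : DF F x -> exists2 f, F f & seg x f.2.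
Proof. by move=> [px [p [Fp e]]]; exists p. Qed.

Lemma SegR_refl F x : S_Lambda F -> DF F x -> SegR F F x.
Proof.
move=> SF /DF_seg [f Ff sx].
exists f, f, (s f.2), (s f.2); split; rewrite ?r_s //.
by rewrite comp_s; split.
Qed.

Lemma SegR_sym F G x : SegR F G x -> SegR G F x.
Proof.
move=> [f [g [al [be [Ff Gg h1 h2 [h3 h4 h5]]]]]].
by exists g, f, be, al; split => //; split => //; rewrite -h3.
Qed.

Lemma SegR_trans F G H x : S_Lambda F -> S_Lambda G -> S_Lambda H ->
  SegR F G x -> SegR G H x -> SegR F H x.
Proof.
move=> SF SG SH [f [g [al [be [Ff Gg h1 h2 [h3 h4 h5]]]]]]
  [g' [h [al' [be' [Gg' Hh h1' h2' [h3' h4' h5']]]]]].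
have [ga1 [ga2 [[/= l1 l2 l3 l4] sc]]] := seg_join h4 h4'.
have sal : s al = r ga1 by rewrite l1 s_comp.
have sal' : s al' = r ga2 by rewrite l2 s_comp.
have sbe : s be = r ga1 by rewrite l1 h3 s_comp.
have sbe' : s be' = r ga2 by rewrite l2 h3' s_comp.
have egg : g = g'.
  apply: (SL_eq2 SG Gg Gg'); exists (comp be ga1), (comp al' ga2); split.
  - by rewrite r_comp.
  - by rewrite r_comp.
  - by rewrite -!compA // -h3.
subst g'.
exists f, h, (comp al ga1), (comp be' ga2); split => //.
- by rewrite r_comp.
- by rewrite r_comp.
split.
- by rewrite -!compA // -h3'.
- by rewrite -compA.
have sf1 : s f.1 = r al by rewrite (SL_s SF Ff).
have sg1 : s g.1 = r be by rewrite (SL_s SG Gg).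
have sg1' : s g.1 = r al' by rewrite (SL_s SG Gg).
have sh1 : s h.1 = r be' by rewrite (SL_s SH Hh).
transitivity (comp g.1 (comp be ga1)).
  by rewrite -compA // h5 compA.
transitivity (comp g.1 (comp al' ga2)); last first.
  by rewrite -compA // h5' compA.
congr comp.
apply: (@lcancel g.2); rewrite ?r_comp //.
by rewrite -!compA // -h3.
Qed.

Lemma Sprod_seg F f al : S_Lambda F -> F f -> s f.2 = r al ->
  Sprod F [set (comp f.2 al, comp f.2 al)] = [set (comp f.1 al, comp f.2 al)].
Proof.
move=> SF Ff sal; set c := comp f.2 al.
have sc : s c = s al by rewrite /c s_comp.
apply/seteqP; split => z.
  move=> [p [q [ab [Fp /= -> [/= l1 l2 l3 l4] ->]]]] /=.
  have sab2 : s al = r ab.2 by rewrite l2.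
  have epf : p = f.
    apply: (SL_eq2 SF Fp Ff); exists ab.1, (comp al ab.2); split => //.
      by rewrite r_comp.
    by rewrite l3 /c compA.
  subst p.
  have dle : forall i, (d f.2 i <= d c i)%N by move=> i; rewrite /c d_compi //; lia.
  have d0 : d ab.2 = nk0 k.
    apply: nk_ext => i; have := f_equal (fun t => t i) l4.
    rewrite /= l3 d_compi /nk_join /nk0; first by have := dle i; lia.
    by rewrite sc.
  have [e2 _] := deg0 d0.
  have eab2 : ab.2 = s c by rewrite e2 l2.
  have eab1 : ab.1 = al.
    by apply: (@lcancel f.2) => //; rewrite l3 eab2 comp_s.
  by rewrite eab1 eab2 comp_s.
move=> -> /=.
exists f, (c, c), (al, s c); split => //=; last by rewrite comp_s.
split => //=; rewrite ?r_s ?comp_s //.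
apply: nk_ext => i; rewrite /nk_join -/c.
have : (d f.2 i <= d c i)%N by rewrite /c d_compi //; lia.
lia.
Qed.

Lemma SL_single (a b : M) : s a = s b -> S_Lambda [set (a, b)].
Proof.
move=> sab; split; first exact: finite_set1.
  by move=> p ->.
by move=> p q -> ->.
Qed.

Lemma Sprod_diag (c : M) : Sprod [set (c, c)] [set (c, c)] = [set (c, c)].
Proof.
have := @Sprod_seg [set (c, c)] (c, c) (s c) (SL_single erefl) erefl (esym (r_s c)).
by rewrite /= comp_s.
Qed.

Lemma idem_diag (P : set (M * M)) p : Sidem P -> P p -> p.1 = p.2.
Proof.
move=> [SP E] Pp.
have : Sprod P P p by rewrite E.
move=> [c [e [ab [Pc Pe [/= l1 l2 l3 l4] ep]]]].
have ec : c = p.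
  apply: (SL_eq1 SP Pc Pp); exists ab.1, (s p.1); split.
  - by rewrite (SL_s SP Pc).
  - by rewrite r_s.
  - by rewrite comp_s ep.
have ee : e = p.
  apply: (SL_eq2 SP Pe Pp); exists ab.2, (s p.2); split.
  - by rewrite -(SL_s SP Pe).
  - by rewrite r_s.
  - by rewrite comp_s ep.
subst c e.
have d1 : d ab.1 = nk0 k.
  apply: nk_ext => i; have := f_equal (fun t => d t.1 i) ep.
  rewrite /= d_compi /nk0; first lia.
  by rewrite (SL_s SP Pp).
have d2 : d ab.2 = nk0 k.
  apply: nk_ext => i; have := f_equal (fun t => d (snd t) i) ep.
  rewrite /= d_compi /nk0; first lia.
  by rewrite -(SL_s SP Pp).
have [e1 _] := deg0 d1; have [e2 _] := deg0 d2.
move: l3; rewrite e1 e2 l1 l2 !comp_s => ->.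
done.
Qed.


Lemma rel_of_SegR (F G : set (M * M)) x : S_Lambda F -> S_Lambda G -> SegR F G x ->
  germ_rel (F, x) (G, x).
Proof.
move=> SF SG [f [g [al [be [Ff Gg h1 h2 [h3 h4 h5]]]]]].
split => //; exists [set (comp f.2 al, comp f.2 al)]; split.
- split; [apply: SL_single | exact: Sprod_diag].
  by [].
- by split; [case: h4 | exists (comp f.2 al, comp f.2 al); split => //; case: h4].
- by rewrite /= (Sprod_seg SF Ff h1) h3 (Sprod_seg SG Gg h2) h5.
Qed.

Lemma SegR_of_rel (F G : set (M * M)) x y : S_Lambda F -> DF F x -> germ_rel (F, x) (G, y) ->
  SegR F G x.
Proof.
move=> SF DFx [/= exy [P [IP [px [p [Pp ep]]]] E]].
have sp : seg x p.2 by split.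
have dp := idem_diag IP Pp.
have SP := IP.1.
have [f Ff sf] := DF_seg DFx.
have [al [be [[/= l1 l2 l3 l4] sc]]] := seg_join sf sp.
have : Sprod F P (comp f.1 al, comp p.2 be).
  by exists f, p, (al, be); split => //; split; rewrite /= ?dp.
rewrite E => -[g [q [ab [Gg Pq [/= m1 m2 m3 m4] [e1 e2]]]]].
have dq := idem_diag IP Pq.
have eqp : q = p.
  apply: (SL_eq2 SP Pq Pp); exists ab.2, be; split => //.
  by rewrite -dq.
subst q.
exists f, g, al, ab.1; split => //.
split => //.
by rewrite l3 e2 -dq -m3.
Qed.

Lemma germ_pair_refl (F : set (M * M)) (x : path_t L) : germ_pair (F, x) -> germ_rel (F, x) (F, x).
Proof. by move=> [SF DFx]; apply: rel_of_SegR => //; apply: SegR_refl. Qed.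

Lemma class_eq (F G : set (M * M)) (x y : path_t L) : germ_pair (F, x) -> germ_pair (G, y) ->
  germ_class (F, x) = germ_class (G, y) <-> x = y /\ SegR F G x.
Proof.
move=> [SF DFx] [SG DFy]; split.
  move=> E.
  have : germ_class (G, y) (G, y) by split; [split | apply: germ_pair_refl; split].
  rewrite -E => -[_ R].
  split; first by case: R.
  exact: SegR_of_rel R.
move=> [exy R]; subst y.
apply/seteqP; split => -[H z] [[SH DFz] R2]; split => //.
  have [/= exz _] := R2; subst z.
  apply: rel_of_SegR => //; apply: (SegR_trans SG SF SH); first exact: SegR_sym.
  exact: SegR_of_rel R2.
have [/= exz _] := R2; subst z.
apply: rel_of_SegR => //; apply: (SegR_trans SF SG SH) => //.
exact: SegR_of_rel R2.
Qed.


Lemma seg_path x nu : seg x nu -> is_path x. Proof. by case. Qed.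

Lemma psi_char (F G : set (M * M)) x (h : germ L) : S_Lambda F -> DF F x ->
  S_Lambda G -> sval h = germ_class (F, x) -> (Psi G h <-> SegR F G x).
Proof.
move=> SF DFx SG eh; split.
  move=> [y [DFy]]; rewrite eh => /class_eq.
  by move=> /(_ (conj SF DFx) (conj SG DFy)) [].
move=> R; have [f [g [al [be [Ff Gg h1 h2 [h3 h4 h5]]]]]] := R.
have DGx : DF G x.
  split; first exact: seg_path h4.
  exists g; split => //.
  by have [] := seg_pref h2 (eq_ind _ (seg x) h4 _ h3).
exists x; split => //; rewrite eh.
by apply/class_eq => //; split.
Qed.

Lemma SegR_min (F G : set (M * M)) x : S_Lambda F -> S_Lambda G ->
  SegR F G x <-> exists f g ab, [/\ F f, G g, Lmin f.2 g.2 ab,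
     comp f.1 ab.1 = comp g.1 ab.2 & seg x (comp f.2 ab.1)].
Proof.
move=> SF SG; split; last first.
  move=> [f [g [ab [Ff Gg [l1 l2 l3 l4] e sx]]]].
  by exists f, g, ab.1, ab.2; split.
move=> [f [g [al [be [Ff Gg h1 h2 [h3 h4 h5]]]]]].
have [al0 [be0 [ga [Lm s1 s2 e1 e2]]]] := common_ext h1 h2 h3.
have [l1 l2 l3 l4] := Lm.
exists f, g, (al0, be0); split => //=.
  have sf1 : s f.1 = r al0 by rewrite (SL_s SF Ff).
  have sg1 : s g.1 = r be0 by rewrite (SL_s SG Gg).
  apply: (@rcancel _ _ ga); rewrite ?s_comp //.
    apply: nk_ext => i; have := f_equal (fun t => d t i) h5.
    rewrite e1 e2 !d_compi ?r_comp //; lia.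
  by rewrite !compA // -e1 -e2.
apply: (@seg_pref _ _ ga); first by rewrite s_comp.
by rewrite compA // -e1.
Qed.

Lemma row0 (x y : path_t L) : is_path x -> is_path y ->
  (forall nu, seg x nu -> seg y nu) ->
  forall q a, x.2 (nk0 k) q = Some a -> y.2 (nk0 k) q = Some a.
Proof.
move=> px py H q a e.
have da : d a = q.
  by rewrite (path_deg px e); apply: nk_ext => i; rewrite /nk_sub /nk0; lia.
have : seg x a by split => //; rewrite da.
by move=> /H [_]; rewrite da.
Qed.

Lemma row0_eq (x y : path_t L) : is_path x -> is_path y ->
  (forall nu, seg x nu -> seg y nu) -> (forall nu, seg y nu -> seg x nu) ->
  forall q, x.2 (nk0 k) q = y.2 (nk0 k) q.
Proof.
move=> px py H1 H2 q.
case ex: (x.2 (nk0 k) q) => [a|]; first by rewrite (row0 px py H1 ex).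
case ey: (y.2 (nk0 k) q) => [b|] //.
by rewrite (row0 py px H2 ey) in ex.
Qed.

Definition nk_unit (i : 'I_k) (t : nat) : nk k := fun j => if j == i then t else 0%N.

Lemma ext_le_unit i t (m : 'I_k -> option nat) :
  ext_le (nk_unit i t) m <-> (if m i is Some n then (t <= n)%N else True).
Proof.
split => [H | H j].
  by have := H i; rewrite /nk_unit eqxx; case: (m i).
rewrite /nk_unit; case: eqP => [->|_].
  by move: H; case: (m i).
by case: (m j).
Qed.

Lemma path_ext (x y : path_t L) : is_path x -> is_path y ->
  (forall nu, seg x nu -> seg y nu) -> (forall nu, seg y nu -> seg x nu) -> x = y.
Proof.
move=> px py H1 H2.
have R := row0_eq px py H1 H2.
have edom : forall q, ext_le q x.1 <-> ext_le q y.1.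
  move=> q; split => Hq.
    have [a ea] : exists a, x.2 (nk0 k) q = Some a by apply/(path_dom _ _ px).
    by have /(path_dom _ _ py) [] : exists a, y.2 (nk0 k) q = Some a by exists a; rewrite -R.
  have [a ea] : exists a, y.2 (nk0 k) q = Some a by apply/(path_dom _ _ py).
  by have /(path_dom _ _ px) [] : exists a, x.2 (nk0 k) q = Some a by exists a; rewrite R.
have em : x.1 = y.1.
  apply: funext => i.
  have Hu : forall t, (if x.1 i is Some n then (t <= n)%N else True) <->
                     (if y.1 i is Some n then (t <= n)%N else True).
    by move=> t; rewrite -!ext_le_unit.
  case ex: (x.1 i) => [a|]; case ey: (y.1 i) => [b|] //.
  - have := Hu a; have := Hu b; rewrite ex ey => -[_ h1] [h2 _].
    by congr Some; apply/eqP; rewrite eqn_leq h2 ?h1.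
  - by have := Hu a.+1; rewrite ex ey => -[_ /(_ I)]; rewrite ltnn.
  - by have := Hu b.+1; rewrite ex ey => -[/(_ I)]; rewrite ltnn.
have one : forall (x y : path_t L), is_path x -> is_path y -> x.1 = y.1 ->
    (forall q, x.2 (nk0 k) q = y.2 (nk0 k) q) ->
    forall p q a, x.2 p q = Some a -> y.2 p q = Some a.
  move=> {px py H1 H2 R edom em x y} x y px py em R p q a e.
  have [pq qm] : nk_le p q /\ ext_le q x.1 by apply/(path_dom _ _ px); exists a.
  have [u eu] : exists u, x.2 (nk0 k) p = Some u.
    by apply/(path_dom _ _ px); split => //; apply: ext_le_mono qm.
  have [c ec] : exists c, x.2 (nk0 k) q = Some c by apply/(path_dom _ _ px).
  have [b eb] : exists b, y.2 p q = Some b by apply/(path_dom _ _ py); rewrite -em.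
  have [s1 E1] := path_comp px eu e ec.
  rewrite R in eu; rewrite R in ec.
  have [s2 E2] := path_comp py eu eb ec.
  rewrite eb; congr Some; apply: (@lcancel u) => //.
  by rewrite -E1 -E2.
case: x px H1 H2 R edom em one => m f px H1 H2 R edom em one.
case: y py H1 H2 R edom em one => m' f' py H1 H2 R edom em one.
simpl in em; subst m'.
have ef : f = f'.
  apply: funext => p; apply: funext => q.
  case e: (f p q) => [a|].
    by have /= -> := one (m, f) (m, f') px py erefl R p q a e.
  case e': (f' p q) => [b|] //.
  have R' : forall q, (m, f').2 (nk0 k) q = (m, f).2 (nk0 k) q by move=> ?; rewrite R.
  by have /= := one (m, f') (m, f) py px erefl R' p q b e'; rewrite e.
by rewrite ef.
Qed.


Section PathOf.
Variable S : set M.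
Hypothesis S0 : exists mu, S mu.
Hypothesis Sher : forall a b, s a = r b -> S (comp a b) -> S a.
Hypothesis Sdir : forall a b, S a -> S b ->
  exists al be, Lmin a b (al, be) /\ S (comp a al).

Lemma S_uniq a b : S a -> S b -> d a = d b -> a = b.
Proof.
move=> Sa Sb dab; have [al [be [[/= l1 l2 l3 l4] _]]] := Sdir Sa Sb.
by have [] := fact_uniq (esym l1) (esym l2) dab l3.
Qed.

Lemma S_big (q : nk k) : (forall i, exists nu, S nu /\ (q i <= d nu i)%N) ->
  exists nu, S nu /\ nk_le q (d nu).
Proof.
move=> H.
suff [nu [Snu Hnu]] : exists nu, S nu /\ forall i, i \in enum 'I_k -> (q i <= d nu i)%N.
  by exists nu; split => // i; apply: Hnu; rewrite mem_enum.
elim: (enum 'I_k) => [|i l [nu1 [S1 H1]]].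
  by have [mu Smu] := S0; exists mu.
have [nu2 [S2 H2]] := H i.
have [al [be [[/= l1 l2 l3 l4] Sc]]] := Sdir S1 S2.
exists (comp nu1 al); split => // j; rewrite in_cons => /orP [/eqP ->|jl].
  by rewrite l4 /nk_join; lia.
by rewrite l4 /nk_join; have := H1 j jl; lia.
Qed.

Lemma S_deg (q : nk k) : (forall i, exists nu, S nu /\ (q i <= d nu i)%N) ->
  exists nu, S nu /\ d nu = q.
Proof.
move=> /S_big [nu [Snu le]].
have h : d nu = nk_add q (nk_sub (d nu) q).
  by apply: nk_ext => i; rewrite /nk_add /nk_sub; have := le i; lia.
have [u [v [suv du dv e]]] := fact_ex h.
by exists u; split => //; apply: (Sher suv); rewrite -e.
Qed.

Lemma bounded_max i B : (forall nu, S nu -> (d nu i <= B)%N) ->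
  exists N, (exists nu, S nu /\ d nu i = N) /\ forall nu, S nu -> (d nu i <= N)%N.
Proof.
elim: B => [|B IH] H.
  have [mu Smu] := S0; exists 0%N; split; last by [].
  by exists mu; split => //; have := H mu Smu; lia.
case: (pselect (exists nu, S nu /\ d nu i = B.+1)) => [h|nh].
  by exists B.+1; split.
apply: IH => nu Snu; have := H nu Snu; rewrite leq_eqVlt => /orP [/eqP e|//].
by case: nh; exists nu.
Qed.

Definition Sm : 'I_k -> option nat := fun i =>
  match pselect (exists N, (exists nu, S nu /\ d nu i = N) /\
                  forall nu, S nu -> (d nu i <= N)%N) with
  | left h => Some (proj1_sig (cid h))
  | right _ => None
  end.

Lemma Sm_spec i t : ((if Sm i is Some n then (t <= n)%N else true) : bool) <->
  exists nu, S nu /\ (t <= d nu i)%N.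
Proof.
rewrite /Sm; case: pselect => [h|nh].
  case: (cid h) => N /= [[nu [Snu e]] HN]; split.
    by move=> tN; exists nu; rewrite e.
  by move=> [nu' [Snu' le]]; apply: leq_trans le (HN _ Snu').
split => // _.
case: (pselect (exists nu, S nu /\ (t <= d nu i)%N)) => // nh2.
case: nh; apply: (@bounded_max i t) => nu Snu.
case: (leqP (d nu i) t) => // lt; case: nh2; exists nu; split => //; exact: ltnW.
Qed.

Lemma ext_le_Sm q : ext_le q Sm <-> forall i, exists nu, S nu /\ (q i <= d nu i)%N.
Proof.
split => H i; first exact: (proj1 (Sm_spec i (q i)) (H i)).
exact: (proj2 (Sm_spec i (q i)) (H i)).
Qed.

Definition SRel (p q : nk k) b := exists nu u,
  [/\ S nu, d nu = q, d u = p, s u = r b & nu = comp u b].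

Lemma SRel_uniq p q b b' : SRel p q b -> SRel p q b' -> b = b'.
Proof.
move=> [nu [u [Snu dnu du sub e]]] [nu' [u' [Snu' dnu' du' sub' e']]].
have enu : nu = nu' by apply: S_uniq => //; rewrite dnu dnu'.
move: e'; rewrite -enu => e'.
have [_ ->] := fact_uniq sub sub' (etrans du (esym du')) (etrans (esym e) e').
done.
Qed.

Definition Sf (p q : nk k) : option M :=
  match pselect (exists b, SRel p q b) with
  | left h => Some (proj1_sig (cid h))
  | right _ => None
  end.

Lemma Sf_some p q b : Sf p q = Some b <-> SRel p q b.
Proof.
rewrite /Sf; case: pselect => [h|nh].
  case: (cid h) => b0 /= Hb0; split; first by case=> <-.
  by move=> Hb; congr Some; apply: SRel_uniq Hb0 Hb.
by split => // Hb; case: nh; exists b.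
Qed.

Definition Sx : path_t L := (Sm, Sf).

Lemma SRel_seg nu : SRel (nk0 k) (d nu) nu <-> S nu.
Proof.
split.
  move=> [nu' [u [Snu' dnu' du sub e]]].
  have [e1 e2] := deg0 du.
  by move: e; rewrite e2 sub comp_r => e; rewrite -e.
move=> Snu; exists nu, (r nu); split => //; rewrite ?d_r ?s_r ?comp_r //.
Qed.

Lemma Sx_path : is_path Sx.
Proof.
split.
- move=> p q; split.
    move=> [a /Sf_some [nu [u [Snu dnu du sua e]]]]; split.
      by move=> i; rewrite -dnu -du e d_compi //; lia.
    by apply/ext_le_Sm => i; exists nu; rewrite dnu.
  move=> [pq /ext_le_Sm /S_deg [nu [Snu dnu]]].
  have h : d nu = nk_add p (nk_sub q p).
    by apply: nk_ext => i; rewrite dnu /nk_add /nk_sub; have := pq i; lia.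
  have [u [b [sub du db e]]] := fact_ex h.
  by exists b; apply/Sf_some; exists nu, u.
- move=> p q a /Sf_some [nu [u [Snu dnu du sua e]]].
  apply: funext => i; have := f_equal (fun t => d t i) e; rewrite d_compi // dnu du; lia.
- move=> p a /Sf_some [nu [u [Snu dnu du sua e]]].
  have da : d a = nk0 k.
    apply: funext => i; have := f_equal (fun t => d t i) e; rewrite d_compi // dnu du /nk0; lia.
  by have [<- _] := deg0 da.
- move=> p q a /Sf_some [nu [u [Snu dnu du sua e]]].
  have Su : S u by apply: (Sher sua); rewrite -e.
  have snu : s nu = s a by rewrite e s_comp.
  split; apply/Sf_some.
    by exists u, u; split; rewrite ?r_r -?sua ?comp_s.
  exists nu, nu; split; rewrite ?r_s //.
  by rewrite -snu comp_s.
- move=> p q t a b c /Sf_some [n1 [u1 [S1 dn1 du1 s1 e1]]]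
    /Sf_some [n2 [u2 [S2 dn2 du2 s2 e2]]] /Sf_some [n3 [u3 [S3 dn3 du3 s3 e3]]].
  have e23 : n2 = n3 by apply: S_uniq => //; rewrite dn2 dn3.
  have Su2 : S u2 by apply: (Sher s2); rewrite -e2.
  have eu2 : u2 = n1 by apply: S_uniq => //; rewrite du2 dn1.
  have sab : s a = r b by rewrite -s2 eu2 e1 s_comp.
  split => //.
  have E : comp u3 c = comp u1 (comp a b) by rewrite -e3 -e23 e2 eu2 e1 compA.
  have [_ ->] := fact_uniq s3 (etrans s1 (esym (r_comp sab))) (etrans du3 (esym du1)) E.
  done.
Qed.

Lemma Sx_seg nu : seg Sx nu <-> S nu.
Proof.
split; first by move=> [_ /Sf_some /SRel_seg].
by move=> Snu; split; [exact: Sx_path | apply/Sf_some/SRel_seg].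
Qed.

End PathOf.

End KG.

Definition eqI (I : Type) := I.
HB.instance Definition _ (I : Type) := gen_eqMixin (eqI I).

Lemma ultra_fin_union (X I : Type) (U : set_system X) (T : set I) (B : I -> set X) :
  UltraFilter U -> finite_set T -> U (\bigcup_(i in T) B i) -> exists2 i, T i & U (B i).
Proof.
move=> UU fT.
have [l eT] := (@finite_seqP (eqI I) T).1 fT.
rewrite eT.
suff H : forall l : seq (eqI I), U (\bigcup_(i in [set` l]) B i) ->
    exists2 i, i \in l & U (B i).
  by move=> /H [i il Ui]; exists i.
elim => [|a l' IH] Hu.
  have [z [i /= + _]] := filter_ex Hu.
  by rewrite in_nil.
case: (in_ultra_setVsetC (B a) UU) => [Ua|Uc]; first by exists a; rewrite ?mem_head.
have : U (\bigcup_(i in [set` l']) B i).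
  apply: filterS (filterI Hu Uc) => z [[i /= il Bi] nB].
  exists i => //=; move: il; rewrite in_cons => /orP [/eqP ei|//].
  by subst i.
by move=> /IH [i il Ui]; exists i => //; rewrite in_cons il orbT.
Qed.

Section Germs.
Variable k : nat.
Variable L : kgraph k.
Local Notation M := (kmor L).
Local Notation r := (@kr _ L).
Local Notation s := (@ks _ L).
Local Notation comp := (@kcomp _ L).
Local Notation d := (@kdeg _ L).

Lemma germ_rep (h : germ L) : exists F x,
  [/\ S_Lambda F, DF F x & sval h = germ_class (F, x)].
Proof. by case: h => C [[F x] [[SF DFx] e]]; exists F, x. Qed.

Lemma germ_eq (g h : germ L) : sval g = sval h -> g = h.
Proof.
case: g => C pC; case: h => C' pC' /= e; subst C'.
by congr exist; apply: Prop_irrelevance.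
Qed.

Lemma transfer (F : set (M * M)) (x y : path_t L) (g h : germ L) :
  S_Lambda F -> DF F x -> DF F y ->
  sval g = germ_class (F, x) -> sval h = germ_class (F, y) ->
  (forall G, S_Lambda G -> Psi G g -> Psi G h) ->
  forall nu, seg x nu -> seg y nu.
Proof.
move=> SF DFx DFy eg eh H nu sxnu.
have [f Ff sf] := DF_seg DFx.
have [al [be [[/= l1 l2 l3 l4] sc]]] := seg_join sf sxnu.
set c := comp f.2 al.
have sf1 : s f.1 = r al by rewrite (SL_s SF Ff).
have sc1 : s (comp f.1 al) = s c by rewrite /c !s_comp.
have SG := SL_single sc1.
have : Psi [set (comp f.1 al, c)] g.
  apply/(psi_char SF DFx SG eg).
  exists f, (comp f.1 al, c), al, (s c); split => //=; rewrite ?r_s //.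
  by split; rewrite ?comp_s // -sc1 comp_s.
move=> /(H _ SG) /(psi_char SF DFy SG eh).
move=> [f' [g' [al' [be' [Ff' /= -> h1 h2 [h3 h4 h5]]]]]].
move: h4; rewrite h3 /= => /(seg_pref h2).
rewrite /c l3 => /seg_pref; apply.
by rewrite l2.
Qed.

Lemma sep (g h : germ L) :
  (forall G, S_Lambda G -> (Psi G g <-> Psi G h)) -> g = h.
Proof.
move=> H.
have [F [x [SF DFx eg]]] := germ_rep g.
have : Psi F h by apply/(H _ SF); exists x.
move=> [y [DFy eh]].
have exy : x = y.
  apply: path_ext; [exact: DFx.1 | exact: DFy.1 | |].
    by apply: (transfer SF DFx DFy eg eh) => G SG /(H _ SG).
  by apply: (transfer SF DFy DFx eh eg) => G SG /(H _ SG).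
by apply: germ_eq; rewrite eg eh exy.
Qed.

End Germs.

Section Topo.
Variable k : nat.
Variable L : kgraph k.
Local Notation M := (kmor L).
Local Notation r := (@kr _ L).
Local Notation s := (@ks _ L).
Local Notation comp := (@kcomp _ L).
Local Notation d := (@kdeg _ L).
Local Notation T := (germ_top L).

Lemma sub_open bF : germ_subbasis_dom bF -> open (germ_subbasis bF : set T).
Proof.
move=> Db; exists [set germ_subbasis bF].
  by move=> A ->; apply: finI_from1.
by rewrite bigcup_set1.
Qed.

Lemma sub_nbhs bF (g : T) : germ_subbasis_dom bF -> germ_subbasis bF g ->
  nbhs g (germ_subbasis bF : set T).
Proof. by move=> Db bg; exists (germ_subbasis bF); split => //; apply: sub_open. Qed.

Lemma cvg_sub (U : set_system T) (g : T) : Filter U ->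
  (forall bF, germ_subbasis_dom bF -> germ_subbasis bF g -> U (germ_subbasis bF)) ->
  U --> g.
Proof.
move=> FU H B [A [[D' sD' eA] Ag AB]].
move: Ag; rewrite -eA => -[A0 D'A0 A0g].
have [E sE eA0] := sD' A0 D'A0.
apply: (filterS AB); apply: (filterS (_ : A0 `<=` A)).
  by move=> z A0z; rewrite -eA; exists A0.
rewrite -eA0; apply: filter_bigI => i iE.
have Di : germ_subbasis_dom i by have := sE i iE; rewrite inE.
apply: H => //.
by move: A0g; rewrite -eA0 => /(_ i); apply; rewrite /= iE.
Qed.


Lemma SL_fin (F : set (M * M)) : S_Lambda F -> finite_set F.
Proof. by case. Qed.

Lemma Psi_compact (F : set (M * M)) : finitely_aligned L -> S_Lambda F ->
  compact (Psi F : set T).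
Proof.
move=> fa SF; rewrite compact_ultra => U UU UP.
pose A nu : set T := [set h : T | exists y,
  [/\ DF F y, sval h = germ_class (F, y) & seg y nu]].
pose S nu := U (A nu).
have [f0 Ff0 Sf0] : exists2 f, F f & S f.2.
  have : U (\bigcup_(f in F) A f.2).
    apply: filterS UP => h [y [DFy e]].
    have [f Ff sf] := DF_seg DFy.
    by exists f => //; exists y.
  by move=> /(ultra_fin_union UU (SL_fin SF)) [f Ff Uf]; exists f.
have S0 : exists mu, S mu by exists f0.2.
have Sher : forall a b, s a = r b -> S (comp a b) -> S a.
  move=> a b sab; apply: filterS => h [y [DFy e sy]]; exists y; split => //.
  exact: seg_pref sab sy.
have Sdir : forall a b, S a -> S b ->
    exists al be, Lmin a b (al, be) /\ S (comp a al).
  move=> a b Sa Sb.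
  have : U (\bigcup_(ab in Lmin a b) A (comp a ab.1)).
    apply: filterS (filterI Sa Sb) => h [[y1 [D1 e1 s1]] [y2 [D2 e2 s2]]].
    have [ey _] := (class_eq (conj SF D1) (conj SF D2)).1 (etrans (esym e1) e2).
    subst y2.
    have [al [be [Lm sc]]] := seg_join s1 s2.
    by exists (al, be) => //; exists y1; split.
  move=> /(ultra_fin_union UU (fa a b)) [[al be] Lm Uab].
  by exists al, be; split.
have px : is_path (Sx S) := Sx_path S0 Sher Sdir.
have xs : forall nu, seg (Sx S) nu <-> S nu := Sx_seg S0 Sher Sdir.
set x := Sx S in px xs.
have DFx : DF F x.
  by split => //; exists f0; split => //; have [] := (xs f0.2).2 Sf0.
have ig : is_germ (germ_class (F, x)) by exists (F, x).
pose g : germ L := exist _ _ ig.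
have eg : sval g = germ_class (F, x) by [].
have key : forall G, S_Lambda G -> (Psi G g <-> U (Psi G)).
  move=> G SG; split.
    move=> /(psi_char SF DFx SG eg) /(SegR_min _ SF SG) [f [g' [ab [Ff Gg' Lm e sx]]]].
    apply: (filterS (_ : A (comp f.2 ab.1) `<=` Psi G)).
      move=> h [y [DFy eh sy]]; apply/(psi_char SF DFy SG eh)/(SegR_min _ SF SG).
      by exists f, g', ab.
    exact/xs.
  move=> UG.
  have : U (\bigcup_(f in F) \bigcup_(g' in G) \bigcup_(ab in Lmin f.2 g'.2)
              [set h | comp f.1 ab.1 = comp g'.1 ab.2 /\ A (comp f.2 ab.1) h]).
    apply: filterS (filterI UP UG) => h [[y [DFy eh]] PG].
    move: PG => /(psi_char SF DFy SG eh)/(SegR_min _ SF SG) [f [g' [ab [Ff Gg' Lm e sy]]]].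
    by exists f => //; exists g' => //; exists ab => //; split => //; exists y; split.
  move=> /(ultra_fin_union UU (SL_fin SF)) [f Ff] /(ultra_fin_union UU (SL_fin SG)) [g' Gg'].
  move=> /(ultra_fin_union UU (fa _ _)) [ab Lm Uab].
  have [h [e Ah]] := filter_ex Uab.
  have UA : U (A (comp f.2 ab.1)) by apply: filterS Uab => z [].
  apply/(psi_char SF DFx SG eg)/(SegR_min _ SF SG).
  by exists f, g', ab; split => //; apply/xs.
exists g; split; first by exists x.
apply: cvg_sub => -[[] G] /= SG.
  by rewrite /germ_subbasis /= => Pg; apply/(key G SG).
rewrite /germ_subbasis /= => nPg.
by case: (in_ultra_setVsetC (Psi G) UU) => // /(key G SG).
Qed.

End Topo.

Unset Implicit Arguments.
Set Strict Implicit.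

Theorem proposition6p3 (k : nat) (L : kgraph k) :
  finitely_aligned L ->
  [/\ hausdorff_space (germ_top L),
      locally_compact [set: germ_top L]
    & forall F : set (kmor L * kmor L), S_Lambda F ->
        compact (Psi F : set (germ_top L))].
Proof.
move=> fa; split.
- move=> p q clu; apply: sep => G SG.
  have Dt : germ_subbasis_dom (true, G) by [].
  have Df : germ_subbasis_dom (false, G) by [].
  split => H.
    apply: contrapT => nq.
    have [z [zp zq]] := clu _ _ (sub_nbhs Dt H) (sub_nbhs Df nq).
    by apply: zq.
  apply: contrapT => np.
  have [z [zp zq]] := clu _ _ (sub_nbhs Df np) (sub_nbhs Dt H).
  by apply: zp.
- move=> g _; rewrite withinET.
  have [F [x [SF DFx eg]]] := germ_rep g.
  have Dt : germ_subbasis_dom (true, F) by [].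
  have Df : germ_subbasis_dom (false, F) by [].
  exists (Psi F : set (germ_top L)).
    by apply: (sub_nbhs Dt); exists x.
  split; first exact: Psi_compact.
  rewrite -(setCK (Psi F)); apply: open_closedC.
  exact: (sub_open Df).
- by move=> F SF; apply: Psi_compact.
Qed.
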